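(* Let $A$ be an algebra with a differential calculus $(\Omega^1_A,\mathrm{d})$ and a Riemannian structure $(g,(\nabla,\sigma))$, let $I\subset A$ be a two-sided ideal such that $B=A/I$ is a (metrically co-orientable) noncommutative hypersurface with normalized central $1$-form $\nu\in\Omega^1_A$, and let $\Pi:q_!(\Omega^1_A)\to q_!(\Omega^1_A)$, $[\omega]\mapsto[\omega-g^{-1}(\omega\otimes_A\nu)\,\nu]$. Then: (i) $\Pi([\nu])=0$; (ii) $\Pi^2=\Pi$; (iii) $\Pi$ induces a well-defined $B$-bimodule map $\Pi:\Omega^1_B\to q_!(\Omega^1_A)$ which is a section of the quotient map $q_!(\Omega^1_A)\twoheadrightarrow\Omega^1_B$; in particular it defines an isomorphism $\Omega^1_B\cong\Pi\,q_!(\Omega^1_A)$.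
   Context: All algebras are associative unital over $\mathbb{C}$. A differential calculus on $A$ is a pair $(\Omega^1_A,\mathrm{d})$, $\Omega^1_A$ an $A$-bimodule, $\mathrm{d}:A\to\Omega^1_A$ linear, satisfying the Leibniz rule and $\Omega^1_A=A\,\mathrm{d}(A)$. A (generalized) metric is an $A$-bimodule map $g:A\to\Omega^1_A\otimes_A\Omega^1_A$, $g(1)=\sum_\alpha g^\alpha\otimes_Ag_\alpha$, with an $A$-bimodule map $g^{-1}:\Omega^1_A\otimes_A\Omega^1_A\to A$ satisfying $\sum_\alpha g^{-1}(\omega\otimes_Ag^\alpha)g_\alpha=\omega=\sum_\alpha g^\alpha g^{-1}(g_\alpha\otimes_A\omega)$; a Riemannian structure is such a metric together with a bimodule connection $(\nabla,\sigma)$ on $\Omega^1_A$ satisfying $g^{-1}\circ\sigma=g^{-1}$ and metric compatibility (only $g^{-1}$ is used here). Let $B=A/I$ with quotient map $q$ and classes $[\cdot]$. For an $A$-bimodule $V$, $q_!(V):=B\otimes_AV\otimes_AB\cong V/(IV+VI)$, where $IV$ (resp. $VI$) is the set of elements $av$ (resp. $va$) with $a\in I$, $v\in V$. Let $N^1_B:=B[\mathrm{d}I]B\subseteq q_!(\Omega^1_A)$ be the $B$-subbimodule generated by the classes $[\mathrm{d}a]$, $a\in I$, and $\Omega^1_B:=q_!(\Omega^1_A)/N^1_B$ with $\mathrm{d}_B[a]=[\mathrm{d}a]$; this is a differential calculus on $B$. $B$ is called a (metrically co-orientable) noncommutative hypersurface if $N^1_B$ admits a one-element basis $[\nu]$ (it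 is free of rank one generated by $[\nu]$) with $\nu\in\Omega^1_A$ central ($a\nu=\nu a$ for all $a\in A$) and $[g^{-1}(\nu\otimes_A\nu)]=1\in B$. The map $\omega\mapsto\omega-g^{-1}(\omega\otimes_A\nu)\nu$ is an $A$-bimodule endomorphism of $\Omega^1_A$ and induces the $B$-bimodule endomorphism $\Pi$ of $q_!(\Omega^1_A)$. *)

(* Defs.v *)
From HB Require Import structures.
From mathcomp Require Import all_boot all_order all_algebra.
From mathcomp Require Import reals complex.
Set Implicit Arguments. Unset Strict Implicit. Unset Printing Implicit Defensive.
Import Order.TTheory GRing.Theory Num.Theory.
Local Open Scope ring_scope.

Section Defs.
Variable C : fieldType.
Variable A : algType C.

Definition bimodule (M : zmodType) (la : A -> M -> M) (ra : M -> A -> M) : Prop :=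
  [/\ (forall a m n, la a (m + n) = la a m + la a n),
      (forall a b m, la (a + b) m = la a m + la b m),
      (forall m, la 1 m = m)
    & (forall a b m, la (a * b) m = la a (la b m))] /\
  [/\ (forall a m n, ra (m + n) a = ra m a + ra n a),
      (forall a b m, ra m (a + b) = ra m a + ra m b),
      (forall m, ra m 1 = m)
    & (forall a b m, ra m (a * b) = ra (ra m a) b)] /\
  (forall a b m, la a (ra m b) = ra (la a m) b) /\
  (forall (c : C) m, la c%:A m = ra m c%:A).

Definition bimodule_map (M N : zmodType) (la : A -> M -> M) (ra : M -> A -> M)
    (la' : A -> N -> N) (ra' : N -> A -> N) (f : M -> N) : Prop :=
  [/\ (forall m n, f (m + n) = f m + f n),
      (forall a m, f (la a m) = la' a (f m))
    & (forall a m, f (ra m a) = ra' (f m) a)].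

Definition lmulA (a x : A) : A := a * x.
Definition rmulA (x a : A) : A := x * a.

Definition balanced (M N W : zmodType) (raM : M -> A -> M) (laN : A -> N -> N)
    (f : M -> N -> W) : Prop :=
  [/\ (forall m1 m2 n, f (m1 + m2) n = f m1 n + f m2 n),
      (forall m n1 n2, f m (n1 + n2) = f m n1 + f m n2)
    & (forall m a n, f (raM m a) n = f m (laN a n))].

Definition is_tensor (M N T : zmodType)
    (laM : A -> M -> M) (raM : M -> A -> M) (laN : A -> N -> N) (raN : N -> A -> N)
    (laT : A -> T -> T) (raT : T -> A -> T) (tens : M -> N -> T) : Prop :=
  bimodule laT raT /\
  [/\ balanced raM laN tens,
      (forall a m n, tens (laM a m) n = laT a (tens m n)),
      (forall m n a, tens m (raN n a) = raT (tens m n) a),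
      (forall t : T, exists s : seq (M * N), t = \sum_(p <- s) tens p.1 p.2)
    & (forall (W : zmodType) (f : M -> N -> W), balanced raM laN f ->
        exists F : T -> W, (forall x y, F (x + y) = F x + F y) /\
                           (forall m n, F (tens m n) = f m n))].

Definition differential_calculus (Om : zmodType) (la : A -> Om -> Om)
    (ra : Om -> A -> Om) (d : A -> Om) : Prop :=
  [/\ bimodule la ra,
      (forall a b, d (a + b) = d a + d b),
      (forall (c : C) a, d (c *: a) = la c%:A (d a)),
      (forall a b, d (a * b) = ra (d a) b + la a (d b))
    & (forall w, exists s : seq (A * A), w = \sum_(p <- s) la p.1 (d p.2))].

Section Riem.
Variables (Om T T3 : zmodType).
Variables (la : A -> Om -> Om) (ra : Om -> A -> Om) (d : A -> Om).
Variables (laT : A -> T -> T) (raT : T -> A -> T) (tens : Om -> Om -> T).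
Variable (tens3 : T -> Om -> T3).

Definition generalized_metric (g : A -> T) (ginv : T -> A) : Prop :=
  [/\ bimodule_map lmulA rmulA laT raT g,
      bimodule_map laT raT lmulA rmulA ginv
    & exists gs : seq (Om * Om),
        [/\ g 1 = \sum_(p <- gs) tens p.1 p.2,
            (forall w, \sum_(p <- gs) la (ginv (tens w p.1)) p.2 = w)
          & (forall w, \sum_(p <- gs) ra p.1 (ginv (tens p.2 w)) = w)]].

Definition bimodule_connection (nabla : Om -> T) (sigma : T -> T) : Prop :=
  [/\ (forall v w, nabla (v + w) = nabla v + nabla w),
      (forall a w, nabla (la a w) = tens (d a) w + laT a (nabla w)),
      bimodule_map laT raT laT raT sigma
    & (forall a w, nabla (ra w a) = raT (nabla w) a + sigma (tens w (d a)))].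

(* Riemannian structure: metric + bimodule connection with
   g^{-1} o sigma = g^{-1} and metric compatibility nabla g = 0, i.e.
   (nabla (x) id + (sigma (x) id)(id (x) nabla)) g(1) = 0 in
   T3 = (Om (x)_A Om) (x)_A Om.  Each entry of gs is ((g^a, g_a), a
   decomposition of nabla g_a into simple tensors). *)
Definition riemannian_structure (g : A -> T) (ginv : T -> A)
    (nabla : Om -> T) (sigma : T -> T) : Prop :=
  [/\ generalized_metric g ginv,
      bimodule_connection nabla sigma,
      (forall t, ginv (sigma t) = ginv t)
    & exists gs : seq (Om * Om * seq (Om * Om)),
        [/\ g 1 = \sum_(p <- gs) tens p.1.1 p.1.2,
            (forall p, p \in gs -> nabla p.1.2 = \sum_(q <- p.2) tens q.1 q.2)
          & \sum_(p <- gs) tens3 (nabla p.1.1) p.1.2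
            + \sum_(p <- gs) \sum_(q <- p.2) tens3 (sigma (tens p.1.1 q.1)) q.2
            = 0]].
End Riem.

Definition two_sided_ideal (I : pred A) : Prop :=
  [/\ I 0, (forall x y, I x -> I y -> I (x - y)),
      (forall a x, I x -> I (a * x)) & (forall a x, I x -> I (x * a))].

Section Quot.
Variables (Om T : zmodType) (la : A -> Om -> Om) (ra : Om -> A -> Om) (d : A -> Om).
Variable (I : pred A).

(* qker w  <->  [w] = 0 in q_!(Om) = Om / (I Om + Om I)   (sub-bimodule
   generated by the a w, w a with a in I). *)
Definition qker (w : Om) : Prop :=
  exists (s1 : seq (A * Om)) (s2 : seq (Om * A)),
    [/\ all (fun p => I p.1) s1, all (fun p => I p.2) s2
      & w = \sum_(p <- s1) la p.1 p.2 + \sum_(p <- s2) ra p.1 p.2].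

(* nker w  <->  [w] lies in N^1_B = B [d I] B, i.e. [w] = 0 in Omega^1_B. *)
Definition nker (w : Om) : Prop :=
  exists (s : seq (A * A * A)) (k : Om),
    [/\ all (fun p => I p.1.2) s, qker k
      & w = \sum_(p <- s) ra (la p.1.1 (d p.1.2)) p.2 + k].

(* B = A/I is a metrically co-orientable noncommutative hypersurface with
   normalised central 1-form nu: nu central, [g^{-1}(nu (x) nu)] = 1 in B,
   and [nu] is a one-element basis of N^1_B. *)
Definition nc_hypersurface (tens : Om -> Om -> T) (ginv : T -> A) (nu : Om) : Prop :=
  [/\ (forall a, la a nu = ra nu a),
      I (ginv (tens nu nu) - 1),
      nker nu,
      (forall w, nker w -> exists b : A, qker (w - la b nu))
    & (forall b : A, qker (la b nu) -> I b)].
End Quot.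

End Defs.

(* Main.v *)
Require Import Defs.
From HB Require Import structures.
From mathcomp Require Import all_boot all_order all_algebra.
From mathcomp Require Import reals complex.
Import Order.TTheory GRing.Theory Num.Theory.
Local Open Scope ring_scope.

Set Implicit Arguments.
Section Add.
Variables (U V : zmodType) (f : U -> V).
Hypothesis fD : forall x y, f (x + y) = f x + f y.
Lemma f0 : f 0 = 0.
Proof. by apply: (addrI (f 0)); rewrite -fD !addr0. Qed.
Lemma fN x : f (- x) = - f x.
Proof. by apply: (addrI (f x)); rewrite -fD !subrr f0. Qed.
Lemma fB x y : f (x - y) = f x - f y.
Proof. by rewrite fD fN. Qed.
Lemma fsum (I : Type) (s : seq I) (F : I -> U) :
  f (\sum_(p <- s) F p) = \sum_(p <- s) f (F p).
Proof. elim: s => [|p s IH]; rewrite ?big_nil ?big_cons ?f0 //. by rewrite fD IH. Qed.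
End Add.
Arguments f0 {U V f}.
Arguments fN {U V f}.
Arguments fB {U V f}.
Arguments fsum {U V f} fD {I}.

Section Q.
Variables (C : fieldType) (A : algType C) (Om : zmodType) (la : A -> Om -> Om)
  (ra : Om -> A -> Om) (d : A -> Om) (I : pred A).
Hypotheses (laD : forall a m n, la a (m+n) = la a m + la a n)
  (laDl : forall a b m, la (a+b) m = la a m + la b m)
  (laM : forall a b m, la (a*b) m = la a (la b m))
  (raD : forall a m n, ra (m+n) a = ra m a + ra n a)
  (raDl : forall a b m, ra m (a+b) = ra m a + ra m b)
  (lara : forall a b m, la a (ra m b) = ra (la a m) b)
  (I0 : I 0) (Isub : forall x y, I x -> I y -> I (x - y))
  (Ilm : forall a x, I x -> I (a * x)) (Irm : forall a x, I x -> I (x * a)).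

Lemma IN x : I x -> I (- x).
Proof. by move=> h; rewrite -sub0r; apply: Isub. Qed.
Lemma ID x y : I x -> I y -> I (x + y).
Proof. by move=> hx hy; rewrite -(opprK y); apply: Isub => //; apply: IN. Qed.
Lemma Isum (J : eqType) (s : seq J) (F : J -> A) :
  (forall p, p \in s -> I (F p)) -> I (\sum_(p <- s) F p).
Proof. move=> h; rewrite big_seq; apply: (big_ind (fun x => I x)) => //; exact: ID. Qed.

Lemma laNl a m : la (- a) m = - la a m.
Proof. exact: (@fN _ _ (fun a => la a m) (fun x y => laDl x y m)). Qed.
Lemma laBl a b m : la (a - b) m = la a m - la b m.
Proof. exact: (@fB _ _ (fun a => la a m) (fun x y => laDl x y m)). Qed.
Lemma laN a m : la a (- m) = - la a m.
Proof. exact: (@fN _ _ (la a) (laD a)). Qed.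
Lemma laB a m n : la a (m - n) = la a m - la a n.
Proof. exact: (@fB _ _ (la a) (laD a)). Qed.
Lemma raB a m n : ra (m - n) a = ra m a - ra n a.
Proof. exact: (@fB _ _ (fun m => ra m a) (raD a)). Qed.
Lemma raN a m : ra (- m) a = - ra m a.
Proof. exact: (@fN _ _ (fun m => ra m a) (raD a)). Qed.
Lemma raNl a m : ra m (- a) = - ra m a.
Proof. exact: (@fN _ _ (fun a => ra m a) (fun x y => raDl x y m)). Qed.

Lemma qker0 : qker la ra I 0.
Proof. by exists [::], [::]; rewrite !big_nil addr0. Qed.
Lemma qkerD u v : qker la ra I u -> qker la ra I v -> qker la ra I (u + v).
Proof.
case=> s1 [s2 [a1 a2 ->]]; case=> t1 [t2 [b1 b2 ->]].
exists (s1 ++ t1), (s2 ++ t2); rewrite !all_cat a1 a2 b1 b2; split => //.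
by rewrite !big_cat addrACA.
Qed.
Lemma qkerN u : qker la ra I u -> qker la ra I (- u).
Proof.
case=> s1 [s2 [a1 a2 ->]].
exists [seq (- p.1, p.2) | p <- s1], [seq (p.1, - p.2) | p <- s2]; split.
- by rewrite all_map; apply/allP => p /= ps; apply: IN; exact: (allP a1).
- by rewrite all_map; apply/allP => p /= ps; apply: IN; exact: (allP a2).
rewrite !big_map opprD -!sumrN; congr (_ + _); apply: eq_bigr => p _ /=.
  by rewrite laNl.
by rewrite raNl.
Qed.
Lemma qker_la c m : I c -> qker la ra I (la c m).
Proof. by move=> h; exists [:: (c, m)], [::]; rewrite /= h big_seq1 big_nil addr0. Qed.
Lemma qker_lmul a u : qker la ra I u -> qker la ra I (la a u).
Proof.
case=> s1 [s2 [a1 a2 ->]].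
exists [seq (a * p.1, p.2) | p <- s1], [seq (la a p.1, p.2) | p <- s2]; split.
- by rewrite all_map; apply/allP => p /= ps; apply: Ilm; exact: (allP a1).
- by rewrite all_map; apply/allP => p /= ps; exact: (allP a2).
rewrite laD !(fsum (laD a)) !big_map; congr (_ + _); apply: eq_bigr => p _ /=.
  by rewrite laM.
by rewrite lara.
Qed.
Lemma qker_I (h : Om -> A) k :
  (forall x y, h (x + y) = h x + h y) ->
  (forall a m, h (la a m) = a * h m) -> (forall a m, h (ra m a) = h m * a) ->
  qker la ra I k -> I (h k).
Proof.
move=> hD hl hr [s1 [s2 [a1 a2 ->]]].
rewrite hD !(fsum hD); apply: ID; apply: Isum => p ps.
  by rewrite hl; apply: Irm; exact: (allP a1).
by rewrite hr; apply: Ilm; exact: (allP a2).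
Qed.

Lemma qker_nker k : qker la ra I k -> nker la ra d I k.
Proof. by move=> h; exists [::], k; rewrite big_nil add0r. Qed.
Lemma nkerD u v : nker la ra d I u -> nker la ra d I v -> nker la ra d I (u + v).
Proof.
case=> s [k [a1 q1 ->]]; case=> t [k' [b1 q2 ->]].
exists (s ++ t), (k + k'); rewrite all_cat a1 b1; split => //.
  exact: qkerD.
by rewrite big_cat addrACA.
Qed.
Lemma nker_lmul c u : nker la ra d I u -> nker la ra d I (la c u).
Proof.
case=> s [k [a1 q1 ->]].
exists [seq (c * p.1.1, p.1.2, p.2) | p <- s], (la c k); split.
- by rewrite all_map.
- exact: qker_lmul.
rewrite laD (fsum (laD c)) big_map; congr (_ + _); apply: eq_bigr => p _ /=.
by rewrite lara laM.
Qed.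
End Q.
Unset Implicit Arguments.

Theorem proposition3p5 (R : realType) (A : algType R[i])
    (Om : zmodType) (la : A -> Om -> Om) (ra : Om -> A -> Om) (d : A -> Om)
    (T : zmodType) (laT : A -> T -> T) (raT : T -> A -> T) (tens : Om -> Om -> T)
    (T3 : zmodType) (la3 : A -> T3 -> T3) (ra3 : T3 -> A -> T3) (tens3 : T -> Om -> T3)
    (g : A -> T) (ginv : T -> A) (nabla : Om -> T) (sigma : T -> T)
    (I : pred A) (nu : Om) :
  differential_calculus la ra d ->
  is_tensor la ra la ra laT raT tens ->
  is_tensor laT raT la ra la3 ra3 tens3 ->
  riemannian_structure la ra d laT raT tens tens3 g ginv nabla sigma ->
  two_sided_ideal I ->
  nc_hypersurface la ra d I tens ginv nu ->
  let Pi := fun w : Om => w - la (ginv (tens w nu)) nu in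
  [/\ (* (i) Pi [nu] = 0 *)
      qker la ra I (Pi nu),
      (* (ii) Pi^2 = Pi on q_!(Om) *)
      (forall w, qker la ra I (Pi (Pi w) - Pi w)),
      (* (iii) Pi is a B-bimodule map on q_!(Om), and it is well defined on
         Omega^1_B = q_!(Om)/N^1_B, i.e. kills N^1_B *)
      (forall w1 w2, qker la ra I (Pi (w1 + w2) - (Pi w1 + Pi w2))) /\
      (forall a b w, qker la ra I (Pi (ra (la a w) b) - ra (la a (Pi w)) b)) /\
      (forall w, nker la ra d I w -> qker la ra I (Pi w)),
      (* it is a section of q_!(Om) ->> Omega^1_B *)
      (forall w, nker la ra d I (Pi w - w))
    & (* hence Omega^1_B ~= Pi q_!(Om): [w]_B |-> [Pi w] is injective
         (its image is Pi q_!(Om) by definition) *)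
      (forall w, qker la ra I (Pi w) <-> nker la ra d I w)].
Proof.
move=> [[[laD laDl la1 laM] [[raD raDl ra1 raM] [lara _]]] _ _ _ _].
move=> [_ [[tDl tDr tbal] tl tr _ _]] _.
move=> [[_ [ginvD ginvl ginvr] _] _ _ _].
move=> [I0 Isub Ilm Irm] [central Inu nkernu nkerb _] Pi.
pose h := fun w => ginv (tens w nu).
have laB' : forall a m n, la a (m - n) = la a m - la a n by move=> a m n; apply: (@fB _ _ (la a)) => x y; apply: laD.
have raB' : forall a m n, ra (m - n) a = ra m a - ra n a by move=> a m n; apply: (@fB _ _ (fun m => ra m a)) => x y; apply: raD.
have laNl' : forall a m, la (- a) m = - la a m by move=> a m; apply: (@fN _ _ (fun a => la a m)) => x y; apply: laDl.
have laBl' : forall a b m, la (a - b) m = la a m - la b m by move=> a b m; apply: (@fB _ _ (fun a => la a m)) => x y; apply: laDl.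
have PiE : forall w, Pi w = w - la (h w) nu by [].
have hD : forall x y, h (x + y) = h x + h y by move=> x y; rewrite /h tDl ginvD.
have hl : forall a m, h (la a m) = a * h m by move=> a m; rewrite /h tl ginvl.
have hr : forall a m, h (ra m a) = h m * a.
  by move=> a m; rewrite /h tbal central tr ginvr.
have hB := fB hD.
have qI := fun k => @qker_I _ _ _ la ra I I0 Isub Ilm Irm h k hD hl hr.
have PiD : forall x y, Pi (x + y) = Pi x + Pi y.
  by move=> x y; rewrite !PiE hD laDl opprD addrACA.
have Pik : forall k, qker la ra I k -> qker la ra I (Pi k).
  move=> k qk; rewrite PiE; apply: qkerD => //; apply: qkerN => //.
  by apply: qker_la; apply: qI.
have Pila : forall b, qker la ra I (Pi (la b nu)).
  move=> b; rewrite PiE hl.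
  have -> : la b nu - la (b * h nu) nu = - la (b * (h nu - 1)) nu.
    by rewrite mulrBr mulr1 laBl' opprB.
  by apply: qkerN => //; apply: qker_la; apply: Ilm.
have iii : forall w, nker la ra d I w -> qker la ra I (Pi w).
  move=> w /nkerb [b qb].
  rewrite -(subrK (la b nu) w) PiD; apply: qkerD => //; exact: Pik.
split.
- have := Pila 1; by rewrite la1.
- move=> w; rewrite [Pi (Pi w)]PiE addrAC subrr add0r.
  apply: qkerN => //; apply: qker_la; rewrite PiE hB hl.
  have -> : h w - h w * h nu = - (h w * (h nu - 1)) by rewrite mulrBr mulr1 opprB.
  by apply: IN => //; apply: Ilm.
- split; first by move=> w1 w2; rewrite PiD subrr; exact: qker0.
  split=> // a b w.
  rewrite !PiE hr hl laB' -laM raB' -(lara (a * h w)) -(central b) -laM subrr.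
  exact: qker0.
- move=> w; rewrite PiE addrAC subrr add0r -laNl'.
  exact: nker_lmul.
- move=> w; split; last exact: iii.
  move=> qP; have -> : w = Pi w + la (h w) nu by rewrite PiE subrK.
  apply: nkerD => //; first exact: qker_nker.
  exact: nker_lmul.
Qed.
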